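(* Let $(X,d)$ be a complete metric space, $\Lambda$ a finite set, $\mathcal{F}=\{X; f_{\lambda}\mid\lambda\in\Lambda\}$ an iterated function system, and $k\ge2$ an integer. Let $\mathcal{F}^k=\{X; f_{\lambda_{k-1}}\circ\cdots\circ f_{\lambda_0}\mid \lambda_0,\dots,\lambda_{k-1}\in\Lambda\}$ be the iterated function system consisting of all compositions of $k$ maps of $\mathcal{F}$ (indexed by $\Pi=\Lambda^k$). If $\mathcal{F}$ has the average shadowing property on $\mathbb{Z}_+$, then so does $\mathcal{F}^k$.
   Context: An iterated function system (IFS) $\mathcal{G}=\{X; g_{\mu}\mid\mu\in M\}$ on a metric space $(X,d)$ is a family of continuous maps $g_\mu:X\to X$ indexed by a finite nonempty set $M$. For $\sigma=(\mu_0,\mu_1,\dots)\in M^{\mathbb{Z}_+}$ write $\mathcal{G}_{\sigma_n}=g_{\mu_{n-1}}\circ\cdots\circ g_{\mu_0}$ for $n\ge1$ and $\mathcal{G}_{\sigma_0}=\mathrm{id}_X$. For $\delta>0$, a sequence $(x_i)_{i\ge0}$ in $X$ is a $\delta$-average pseudo-orbit of $\mathcal{G}$ if there exist a natural number $N$ and $\sigma=(\mu_0,\mu_1,\dots)\in M^{\mathbb{Z}_+}$ such that for all $n\ge N$, $\frac1n\sum_{i=0}^{n-1}d(g_{\mu_i}(x_i),x_{i+1})<\delta$. A sequence $(x_i)_{i\ge0}$ is $\epsilon$-shadowed in average by $z\in X$ if there exists $\sigma\in M^{\mathbb{Z}_+}$ with $\limsup_{n\to\infty}\frac1n\sum_{i=0}^{n-1}d(\mathcal{G}_{\sigma_i}(z),x_i)<\epsilon$.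 $\mathcal{G}$ has the average shadowing property (on $\mathbb{Z}_+$) if for every $\epsilon>0$ there is $\delta>0$ such that every $\delta$-average pseudo-orbit of $\mathcal{G}$ is $\epsilon$-shadowed in average by some point of $X$. *)

(* Defs.v *)
From Stdlib Require Import Reals List Arith.
From Coquelicot Require Import Coquelicot.
Open Scope R_scope.

Definition is_metric {X : Type} (d : X -> X -> R) : Prop :=
  (forall x y, 0 <= d x y) /\
  (forall x y, d x y = 0 <-> x = y) /\
  (forall x y, d x y = d y x) /\
  (forall x y z, d x z <= d x y + d y z).

Definition is_complete {X : Type} (d : X -> X -> R) : Prop :=
  forall u : nat -> X,
    (forall eps, 0 < eps -> exists N, forall m n, (N <= m)%nat -> (N <= n)%nat ->
        d (u m) (u n) < eps) ->
    exists x, forall eps, 0 < eps -> exists N, forall n, (N <= n)%nat -> d (u n) x < eps.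

Definition metric_continuous {X : Type} (d : X -> X -> R) (f : X -> X) : Prop :=
  forall x eps, 0 < eps -> exists delta, 0 < delta /\
    forall y, d x y < delta -> d (f x) (f y) < eps.

Definition finite_nonempty (M : Type) : Prop :=
  inhabited M /\ exists l : list M, forall m, In m l.

Fixpoint psum (u : nat -> R) (n : nat) : R :=
  match n with O => 0 | S m => psum u m + u m end.

Fixpoint orbit {X M : Type} (g : M -> X -> X) (s : nat -> M) (n : nat) (z : X) : X :=
  match n with O => z | S m => g (s m) (orbit g s m z) end.

Definition avg_pseudo_orbit {X M : Type} (d : X -> X -> R) (g : M -> X -> X)
  (delta : R) (x : nat -> X) : Prop :=
  exists (N : nat) (s : nat -> M), forall n : nat, (N <= n)%nat -> (0 < n)%nat ->
    / INR n * psum (fun i => d (g (s i) (x i)) (x (S i))) n < delta.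

Definition avg_shadowed {X M : Type} (d : X -> X -> R) (g : M -> X -> X)
  (eps : R) (x : nat -> X) (z : X) : Prop :=
  exists s : nat -> M,
    Rbar_lt (LimSup_seq (fun n => / INR n * psum (fun i => d (orbit g s i z) (x i)) n))
            (Finite eps).

Definition average_shadowing {X M : Type} (d : X -> X -> R) (g : M -> X -> X) : Prop :=
  forall eps, 0 < eps -> exists delta, 0 < delta /\
    forall x : nat -> X, avg_pseudo_orbit d g delta x ->
      exists z : X, avg_shadowed d g eps x z.

(* the k-fold IFS: index p = [l0; ...; l_{k-1}], map f_{l_{k-1}} o ... o f_{l_0} *)
Definition word (L : Type) (k : nat) : Type := { l : list L | length l = k }.

Definition compose_word {X L : Type} (f : L -> X -> X) (l : list L) (x : X) : X :=
  fold_left (fun y a => f a y) l x.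

Definition ifs_power {X L : Type} (f : L -> X -> X) (k : nat) : word L k -> X -> X :=
  fun p => compose_word f (proj1_sig p).

(* Main.v *)
Require Import Defs.
From Stdlib Require Import Reals List Arith.
From Coquelicot Require Import Coquelicot.
From Stdlib Require Import Lia Lra.
Open Scope R_scope.

Lemma psum_ext (u v : nat -> R) n : (forall i, (i < n)%nat -> u i = v i) -> psum u n = psum v n.
Proof. induction n; simpl; intros H; auto. rewrite IHn by (intros; apply H; lia). rewrite H by lia; auto. Qed.

Lemma psum_add (u : nat -> R) a b : psum u (a + b) = psum u a + psum (fun i => u (a + i)%nat) b.
Proof. induction b; simpl. rewrite Nat.add_0_r; ring. rewrite Nat.add_succ_r; simpl. rewrite IHb; ring. Qed.

Lemma psum_nonneg (u : nat -> R) n : (forall i, 0 <= u i) -> 0 <= psum u n.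
Proof. intros H; induction n; simpl; [lra|]. specialize (H n); lra. Qed.

Lemma psum_mono (u : nat -> R) a b : (forall i, 0 <= u i) -> (a <= b)%nat -> psum u a <= psum u b.
Proof. intros H Hab. replace b with (a + (b - a))%nat by lia. rewrite psum_add.
  pose proof (psum_nonneg (fun i => u (a+i)%nat) (b-a) (fun i => H _)); lra. Qed.

Lemma psum_ge_first (u : nat -> R) k : (forall i, 0 <= u i) -> (1 <= k)%nat -> u O <= psum u k.
Proof. intros H Hk. destruct k; [lia|]. simpl. pose proof (H k).
  destruct k. simpl; lra. pose proof (psum_mono u 1 (S k) H ltac:(lia)). simpl in H1. simpl. lra. Qed.

Lemma psum_sub (u : nat -> R) k n : (forall i, 0 <= u i) -> (1 <= k)%nat ->
  psum (fun j => u (j * k)%nat) n <= psum u (n * k).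
Proof. intros H Hk. induction n. simpl; lra. simpl psum at 1.
  replace (S n * k)%nat with (n*k + k)%nat by lia. rewrite psum_add.
  pose proof (psum_ge_first (fun i => u (n*k+i)%nat) k (fun i => H _) Hk). simpl in H0.
  rewrite Nat.add_0_r in H0. lra. Qed.

Lemma compose_seq {X L} (f : L -> X -> X) (s : nat -> L) z b : forall a,
  compose_word f (map s (seq a b)) (orbit f s a z) = orbit f s (a + b) z.
Proof. induction b; intros a; simpl. rewrite Nat.add_0_r; auto.
  unfold compose_word in *; simpl. change (f (s a) (orbit f s a z)) with (orbit f s (S a) z).
  rewrite IHb. f_equal; lia. Qed.

Lemma firstn_S_nth {A} (l : list A) r dflt : (r < length l)%nat ->
  firstn (S r) l = firstn r l ++ nth r l dflt :: nil.
Proof. revert r; induction l; intros r Hr; simpl in *. lia.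
  destruct r; simpl; auto. f_equal. apply IHl; lia. Qed.

Lemma compose_S {X L} (f : L -> X -> X) l r dflt y : (r < length l)%nat ->
  compose_word f (firstn (S r) l) y = f (nth r l dflt) (compose_word f (firstn r l) y).
Proof. intros H. rewrite (firstn_S_nth l r dflt H). unfold compose_word. rewrite fold_left_app. reflexivity. Qed.

Lemma divmod_block k n r : (r < k)%nat -> ((n*k + r)/k = n /\ (n*k+r) mod k = r)%nat.
Proof. intros H. split.
  - symmetry. apply (Nat.div_unique _ _ _ r); lia.
  - symmetry. apply (Nat.mod_unique _ _ n); lia. Qed.

Theorem mainTheorem3 (X : Type) (d : X -> X -> R) (L : Type) (f : L -> X -> X) (k : nat) :
  is_metric d -> is_complete d ->
  finite_nonempty L ->
  (forall a : L, metric_continuous d (f a)) ->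
  (2 <= k)%nat ->
  average_shadowing d f ->
  average_shadowing d (ifs_power f k).
Proof.
  intros [dpos [dzero [dsym dtri]]] _ [[dflt] _] _ Hk HAS eps Heps.
  destruct k as [|k']; [lia|]. set (k := S k') in *.
  assert (Hkr : 0 < INR k) by (apply lt_0_INR; lia).
  destruct (HAS (eps / INR k)) as [delta [Hdelta Hsh]].
  { apply Rdiv_lt_0_compat; lra. }
  exists delta; split; [exact Hdelta|].
  intros y [N [p Hp]].
  set (x := fun i => compose_word f (firstn (i mod k) (proj1_sig (p (i / k)%nat))) (y (i / k)%nat)).
  set (s := fun i => nth (i mod k) (proj1_sig (p (i / k)%nat)) dflt).
  set (e := fun j => d (ifs_power f k (p j) (y j)) (y (S j))).
  set (eF := fun i => d (f (s i) (x i)) (x (S i))).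
  assert (Hx : forall n r, (r < k)%nat -> x (n*k + r)%nat = compose_word f (firstn r (proj1_sig (p n))) (y n)).
  { intros n r Hr. destruct (divmod_block k n r Hr) as [E1 E2]. unfold x. rewrite E1, E2. auto. }
  assert (Hs : forall n r, (r < k)%nat -> s (n*k + r)%nat = nth r (proj1_sig (p n)) dflt).
  { intros n r Hr. destruct (divmod_block k n r Hr) as [E1 E2]. unfold s. rewrite E1, E2. auto. }
  assert (Hlen : forall n, length (proj1_sig (p n)) = k) by (intros n; destruct (p n); auto).
  assert (Hblock : forall n, psum eF (n*k) = psum e n).
  { induction n. simpl; auto. replace (S n * k)%nat with (n*k + k)%nat by lia.
    rewrite psum_add, IHn. change (psum e (S n)) with (psum e n + e n). f_equal.
    change (psum (fun i => eF (n*k+i)%nat) (S k') = e n). simpl psum.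
    rewrite (psum_ext (fun i => eF (n*k+i)%nat) (fun _ => 0) k').
    2:{ intros i Hi. unfold eF. rewrite Hs by lia. rewrite <- Nat.add_succ_r.
        rewrite (Hx n (S i)) by lia. rewrite Hx by lia. rewrite (compose_S f _ i dflt) by (rewrite Hlen; lia).
        apply dzero; auto. }
    assert (Z : forall m, psum (fun _ => 0) m = 0) by (induction m; simpl; auto; rewrite IHm; ring).
    rewrite Z, Rplus_0_l. unfold eF, e. rewrite Hs by lia. rewrite Hx by lia.
    replace (S (n * k + k')) with (S n * k + 0)%nat by lia. rewrite Hx by lia.
    simpl firstn. rewrite <- (compose_S f _ k' dflt) by (rewrite Hlen; lia).
    rewrite firstn_all2 by (rewrite Hlen; lia). unfold compose_word at 2. simpl. auto. }
  assert (HeF : forall i, 0 <= eF i) by (intros; apply dpos).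
  assert (Hpo : avg_pseudo_orbit d f delta x).
  { exists (k * (N + 1))%nat, s. intros m Hm Hm0.
    set (q := (m / k)%nat).
    assert (Hq1 : (k * q <= m)%nat) by (apply Nat.Div0.mul_div_le).
    assert (Hq2 : (m < k * (q+1))%nat).
    { pose proof (Nat.div_mod_eq m k). pose proof (Nat.mod_upper_bound m k ltac:(lia)). fold q in H. lia. }
    assert (HqN : (N + 1 <= q)%nat).
    { unfold q. apply Nat.div_le_lower_bound; lia. }
    assert (Hqm : (q + 1 <= m)%nat) by nia.
    pose proof (psum_mono eF m ((q+1)*k) HeF ltac:(nia)) as M1.
    rewrite Hblock in M1.
    pose proof (Hp (q+1)%nat ltac:(lia) ltac:(lia)) as M2.
    assert (Hm0r : 0 < INR m) by (apply lt_0_INR; lia).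
    assert (Hqr : 0 < INR (q+1)) by (apply lt_0_INR; lia).
    assert (Hqmr : INR (q+1) <= INR m) by (apply le_INR; lia).
    fold eF.
    apply (Rmult_lt_reg_l (INR m)); auto. rewrite <- Rmult_assoc, Rinv_r by lra.
    apply (Rmult_lt_compat_l (INR (q+1))) in M2; auto.
    rewrite <- Rmult_assoc, Rinv_r in M2 by lra. fold e in M2.
    assert (INR (q+1) * delta <= INR m * delta) by (apply Rmult_le_compat_r; lra).
    lra. }
  destruct (Hsh x Hpo) as [z [sig Hsig]].
  exists z.
  assert (tauP : forall j, length (map sig (seq (j*k) k)) = k)
    by (intros; rewrite length_map, length_seq; auto).
  exists (fun j => exist (fun l => length l = k) _ (tauP j)).
  assert (Horb : forall j, orbit (ifs_power f k) (fun j => exist (fun l => length l = k) _ (tauP j)) j z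
                          = orbit f sig (j*k) z).
  { induction j. auto.
    change (ifs_power f k (exist (fun l => length l = k) _ (tauP j))
       (orbit (ifs_power f k) (fun j => exist (fun l => length l = k) _ (tauP j)) j z) = orbit f sig (S j * k) z).
    rewrite IHj. transitivity (compose_word f (map sig (seq (j*k) k)) (orbit f sig (j*k) z)); [reflexivity|].
    rewrite compose_seq. f_equal. lia. }
  assert (Hy : forall j, y j = x (j*k)%nat).
  { intros j. rewrite <- (Nat.add_0_r (j*k)). rewrite Hx by lia. auto. }
  set (D := fun i => d (orbit f sig i z) (x i)).
  set (u := fun m => / INR m * psum D m).
  change (Rbar_lt (LimSup_seq u) (eps / INR k)) in Hsig.
  assert (Hc : exists c N0, c < eps / INR k /\ forall m, (N0 <= m)%nat -> u m < c).
  { destruct (ex_LimSup_seq u) as [l Hl].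
    rewrite (is_LimSup_seq_unique _ _ Hl) in Hsig.
    destruct l as [l| |]; simpl in Hl.
    - change (l < eps / INR k) in Hsig. assert (Hpe : 0 < (eps / INR k - l) / 2) by lra.
      destruct (Hl (mkposreal _ Hpe)) as [_ [N0 HN0]].
      exists (l + (eps / INR k - l) / 2), N0. split; [lra|]. exact HN0.
    - contradiction.
    - destruct (Hl 0) as [N0 HN0]. exists 0, N0. split; auto.
      apply Rdiv_lt_0_compat; lra. }
  destruct Hc as [c [N0 [Hc1 Hc2]]].
  apply Rbar_le_lt_trans with (LimSup_seq (fun _ => INR k * c)).
  - apply LimSup_le. exists (S N0). intros n Hn.
    rewrite (psum_ext _ (fun j => D (j*k)%nat)).
    2:{ intros i _. rewrite Horb, Hy. auto. }
    pose proof (psum_sub D k n (fun i => dpos _ _) ltac:(lia)) as P1.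
    pose proof (Hc2 (n*k)%nat ltac:(nia)) as P2. unfold u in P2.
    rewrite mult_INR in P2.
    assert (Hn0 : 0 < INR n) by (apply lt_0_INR; lia).
    rewrite Rinv_mult in P2.
    assert (0 < / INR n) by (apply Rinv_0_lt_compat; auto).
    apply Rmult_le_reg_l with (INR n); auto.
    rewrite <- Rmult_assoc, Rinv_r by lra.
    assert (Q : / INR n * / INR k * psum D (n * k) * (INR n * INR k) = psum D (n*k)) by (field; lra).
    assert (/ INR n * / INR k * psum D (n * k) * (INR n * INR k) <= c * (INR n * INR k)).
    { apply Rmult_le_compat_r. nra. lra. }
    nra.
  - rewrite LimSup_seq_const. simpl.
    apply (Rmult_lt_compat_l (INR k)) in Hc1; auto.
    unfold Rdiv in Hc1. rewrite (Rmult_comm eps), <- Rmult_assoc, Rinv_r, Rmult_1_l in Hc1 by lra. exact Hc1.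
Qed.
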